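(* Let $\mathbb{k}$ be a field, $m\ge2$, and $f_1,\dots,f_m\in\mathbb{k}[x_1,\dots,x_n]$ with $\gcd(f_1,\dots,f_m)=1$. Then there exists an infinite sequence $\{h_i\}_{i\ge1}$ of elements of the ideal $(f_1,\dots,f_m)$ such that $\gcd(h_i,h_j)=1$ for all $i\ne j$. *)

(* Defs.v *)
From HB Require Import structures.
From mathcomp Require Import all_boot all_order all_algebra.
From mathcomp Require Export mpoly.
Set Implicit Arguments. Unset Strict Implicit. Unset Printing Implicit Defensive.
Import GRing.Theory.
Local Open Scope ring_scope.

Definition mdvd (k : fieldType) (n : nat) (d p : {mpoly k[n]}) : Prop :=
  exists q : {mpoly k[n]}, p = q * d.

Definition munit (k : fieldType) (n : nat) (d : {mpoly k[n]}) : Prop :=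
  exists e : {mpoly k[n]}, d * e = 1.

Definition gcd_one (k : fieldType) (n : nat) (I : finType) (f : I -> {mpoly k[n]}) : Prop :=
  forall d : {mpoly k[n]}, (forall i, mdvd d (f i)) -> munit d.

Definition coprime2 (k : fieldType) (n : nat) (g h : {mpoly k[n]}) : Prop :=
  forall d : {mpoly k[n]}, mdvd d g -> mdvd d h -> munit d.

Definition in_ideal (k : fieldType) (n m : nat) (f : 'I_m -> {mpoly k[n]}) (h : {mpoly k[n]}) : Prop :=
  exists c : 'I_m -> {mpoly k[n]}, h = \sum_(i < m) c i * f i.

(* Main.v *)
Require Import Defs.
From mathcomp Require Import all_boot all_order all_algebra.
From mathcomp Require Import mpoly.
From Stdlib Require Import ClassicalEpsilon Classical Lia.
From mathcomp Require Import zify.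
Set Implicit Arguments. Unset Strict Implicit. Unset Printing Implicit Defensive.
Import GRing.Theory.
Local Open Scope ring_scope.


Section Gen.
Variable A : idomainType.
Implicit Types a b c d x y : A.

Definition dv a b : Prop := exists q, b = q * a.
Definition irr a : Prop := a != 0 /\ a \notin GRing.unit /\
  forall b c, a = b * c -> b \in GRing.unit \/ c \in GRing.unit.
Definition prm a : Prop := a != 0 /\ a \notin GRing.unit /\
  forall b c, dv a (b * c) -> dv a b \/ dv a c.

Lemma dv_refl a : dv a a. Proof. by exists 1; rewrite mul1r. Qed.
Lemma dv0 a : dv a 0. Proof. by exists 0; rewrite mul0r. Qed.
Lemma dv_trans a b c : dv a b -> dv b c -> dv a c.
Proof. by move=> [q ->] [r ->]; exists (r * q); rewrite mulrA. Qed.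
Lemma dv_mull a b c : dv a b -> dv a (c * b).
Proof. by move=> [q ->]; exists (c * q); rewrite mulrA. Qed.
Lemma dv_mulr a b c : dv a b -> dv a (b * c).
Proof. by move=> h; rewrite mulrC; apply: dv_mull. Qed.
Lemma dv_add a b c : dv a b -> dv a c -> dv a (b + c).
Proof. by move=> [q ->] [r ->]; exists (q + r); rewrite mulrDl. Qed.
Lemma dv_opp a b : dv a b -> dv a (- b).
Proof. by move=> [q ->]; exists (- q); rewrite mulNr. Qed.
Lemma dv_sub a b c : dv a (b + c) -> dv a b -> dv a c.
Proof.
move=> h1 h2; have -> : c = (b + c) + - b by rewrite addrC addKr.
by apply: dv_add => //; apply: dv_opp.
Qed.
Lemma dv_unit a u : u \in GRing.unit -> dv a u -> a \in GRing.unit.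
Proof.
move=> Uu [q eq]; apply/unitrP; exists (q * u^-1).
have h : q * u^-1 * a = 1 by rewrite mulrAC -eq mulrV.
by split => //; rewrite mulrC.
Qed.
Lemma dv_of_unit u a : u \in GRing.unit -> dv u a.
Proof. by move=> Uu; exists (a / u); rewrite divrK. Qed.
Lemma dv_cancel a b c : c != 0 -> dv (a * c) (b * c) -> dv a b.
Proof.
move=> nz [q]; rewrite mulrA => /mulIf; move=> /(_ nz) ->.
by exists q.
Qed.

Lemma prm_prod p (s : seq A) : prm p -> dv p (\prod_(x <- s) x) ->
  exists2 x, x \in s & dv p x.
Proof.
move=> [nz [nu hp]]; elim: s => [|y s ih].
  by rewrite big_nil => /(dv_unit (unitr1 A)); rewrite (negbTE nu).
rewrite big_cons => /hp [h|h]; first by exists y; rewrite ?mem_head.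
by case: (ih h) => x xs dx; exists x => //; rewrite in_cons xs orbT.
Qed.

Lemma prm_produ p u (s : seq A) : prm p -> u \in GRing.unit ->
  dv p (u * \prod_(x <- s) x) -> exists2 x, x \in s & dv p x.
Proof.
move=> pp Uu h; apply: (prm_prod pp).
have -> : \prod_(x <- s) x = u^-1 * (u * \prod_(x <- s) x) by rewrite mulKr.
exact: dv_mull.
Qed.

Lemma dv_prod_mem x (s : seq A) : x \in s -> dv x (\prod_(y <- s) y).
Proof.
elim: s => // y s ih; rewrite in_cons big_cons => /orP[/eqP->|xs].
  exact/dv_mulr/dv_refl.
exact/dv_mull/ih.
Qed.

Lemma irr_prm_dv r x : irr x -> r \notin GRing.unit -> dv r x -> dv x r.
Proof.
move=> [_ [_ hx]] nu [w ew]; case: (hx _ _ ew) => [Uw|Ur].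
  by exists w^-1; rewrite ew mulKr.
by rewrite Ur in nu.
Qed.

Definition decP (P : Prop) : bool :=
  if excluded_middle_informative P then true else false.
Lemma decPE (P : Prop) : decP P <-> P.
Proof. by rewrite /decP; case: excluded_middle_informative. Qed.

Variable m : nat.
Variable f : 'I_m -> A.
Definition inI h : Prop := exists c : 'I_m -> A, h = \sum_(i < m) c i * f i.

Lemma inI_f k : inI (f k).
Proof.
exists (fun i => (i == k)%:R); rewrite (bigD1 k) //= eqxx mul1r big1 ?addr0 //.
by move=> i /negbTE ->; rewrite mul0r.
Qed.
Lemma inI_add h1 h2 : inI h1 -> inI h2 -> inI (h1 + h2).
Proof.
move=> [c1 ->] [c2 ->]; exists (fun i => c1 i + c2 i); rewrite -big_split /=.
by apply: eq_bigr => i _; rewrite mulrDl.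
Qed.
Lemma inI_mul a h : inI h -> inI (a * h).
Proof.
move=> [c ->]; exists (fun i => a * c i); rewrite mulr_sumr.
by apply: eq_bigr => i _; rewrite mulrA.
Qed.

Hypothesis gcd1 : forall d, (forall i, dv d (f i)) -> d \in GRing.unit.
Hypothesis IP : forall a, irr a -> prm a.
Hypothesis FE : forall a, a != 0 -> exists s : seq A, exists2 u,
  u \in GRing.unit & (forall x, x \in s -> irr x) /\ a = u * \prod_(x <- s) x.

Lemma exists_nz : exists k, f k != 0.
Proof.
apply: NNPP => H; have : (0 : A) \in GRing.unit.
  by apply: gcd1 => i; case: (eqVneq (f i) 0) => [->|nz]; [apply: dv0 | case: H; exists i].
by rewrite unitr0.
Qed.

Lemma avoid (s : seq A) : (forall x, x \in s -> prm x) ->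
  exists h, [/\ inI h, h != 0 & forall x, x \in s -> ~ dv x h].
Proof.
elim: s => [|q s ih] hs.
  by case: exists_nz => k nz; exists (f k); split => //; apply: inI_f.
have [h' [Ih' nz' nd']] : exists h, [/\ inI h, h != 0 & forall x, x \in s -> ~ dv x h].
  by apply: ih => x xs; apply: hs; rewrite in_cons xs orbT.
have pq : prm q by apply: hs; rewrite mem_head.
case: (classic (dv q h')) => dqh; last first.
  exists h'; split => // x; rewrite in_cons => /orP[/eqP->//|]; exact: nd'.
have [k nk] : exists k, ~ dv q (f k).
  apply: NNPP => H; case: pq => _ [nu _]; move/negP: nu; apply; apply: gcd1 => i.
  by apply: NNPP => H'; apply: H; exists i.
pose s' := [seq x <- s | ~~ decP (dv q x)].
pose Q := \prod_(x <- s') x.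
have nqQ : ~ dv q Q.
  move=> /(prm_prod pq) [x]; rewrite mem_filter => /andP[/negP nd _] /decPE.
  exact: nd.
have nqh : ~ dv q (h' + Q * f k).
  move=> /dv_sub /(_ dqh); case: pq => _ [_ hp] /hp [//|//].
exists (h' + Q * f k); split.
- by apply: inI_add => //; apply: inI_mul; apply: inI_f.
- by apply/eqP => e; apply: nqh; rewrite e; apply: dv0.
move=> x; rewrite in_cons => /orP[/eqP->//|xs] dxh.
case: (classic (dv q x)) => [dqx|ndqx].
  by apply: nqh; apply: dv_trans dxh.
have xs' : x \in s' by rewrite mem_filter xs andbT; apply/negP => /decPE.
apply: (nd' x xs); apply: (dv_sub (b := Q * f k)); first by rewrite addrC.
by apply: dv_mulr; apply: dv_prod_mem.
Qed.

Lemma key P : P != 0 -> exists h, [/\ inI h, h != 0 &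
  forall d, dv d h -> dv d P -> d \in GRing.unit].
Proof.
move=> nzP; case: (FE nzP) => s [u Uu [irs eP]].
case: (avoid (s := s)) => [x xs|h [Ih nzh nd]]; first by apply: IP; apply: irs.
exists h; split => // d ddh ddP; apply: NNPP => nu.
have nzd : d != 0.
  by apply/eqP => ez; move: nzh; case: ddh => q ->; rewrite ez mulr0 eqxx.
case: (FE nzd) => s' [u' Uu' [irs' ed]].
case: s' irs' ed => [|r s'] irs' ed.
  by apply: nu; rewrite ed big_nil mulr1.
have ir : irr r by apply: irs'; rewrite mem_head.
have drd : dv r d by rewrite ed big_cons; apply/dv_mull/dv_mulr/dv_refl.
have := dv_trans drd ddP; rewrite eP => /(prm_produ (IP ir) Uu) [x xs drx].
apply: (nd x xs); apply: dv_trans ddh; apply: dv_trans drd.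
by apply: irr_prm_dv (irs x xs) _ drx; case: ir => _ [].
Qed.

Theorem gen_main : exists h : nat -> A, (forall i, inI (h i)) /\
  (forall i j, i <> j -> forall d, dv d (h i) -> dv d (h j) -> d \in GRing.unit).
Proof.
have K : forall P, exists h, P != 0 -> [/\ inI h, h != 0 &
    forall d, dv d h -> dv d P -> d \in GRing.unit].
  move=> P; case: (eqVneq P 0) => [->|nz]; first by exists 0.
  by case: (key nz) => h hh; exists h.
pose C P := proj1_sig (constructive_indefinite_description _ (K P)).
have CP P : P != 0 -> [/\ inI (C P), C P != 0 &
    forall d, dv d (C P) -> dv d P -> d \in GRing.unit].
  exact: (proj2_sig (constructive_indefinite_description _ (K P))).
pose fix Pr n := if n is n'.+1 then Pr n' * C (Pr n') else 1.
have nzP n : Pr n != 0.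
  elim: n => [|n ih] /=; first exact: oner_neq0.
  by rewrite mulf_neq0 //; case: (CP _ ih).
have dvP i j : (i < j)%N -> dv (C (Pr i)) (Pr j).
  elim: j => // j ih; rewrite ltnS leq_eqVlt => /orP[/eqP->|lt] /=.
    exact/dv_mull/dv_refl.
  exact/dv_mulr/ih.
exists (fun i => C (Pr i)); split; first by move=> i; case: (CP _ (nzP i)).
have W i j : (i < j)%N -> forall d, dv d (C (Pr i)) -> dv d (C (Pr j)) -> d \in GRing.unit.
  move=> lt d d1 d2; case: (CP _ (nzP j)) => _ _; apply => //.
  exact: dv_trans d1 (dvP _ _ lt).
move=> i j ne d d1 d2; case: (ltngtP i j) => [lt|lt|eq] //.
- exact: W lt _ d1 d2.
- exact: W lt _ d2 d1.
Qed.

End Gen.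

Lemma ex_min (P : nat -> Prop) : (exists i, P i) ->
  exists i, P i /\ forall j, (j < i)%N -> ~ P j.
Proof.
move=> H; have H' : exists i, decP (P i) by case: H => i Pi; exists i; apply/decPE.
case: (ex_minnP H') => i /decPE Pi hm; exists i; split => // j lt Pj.
by have := hm j (proj2 (decPE _) Pj); rewrite leqNgt lt.
Qed.

Section PolyUFD.
Variable A : idomainType.
Hypothesis IP : forall a : A, irr a -> prm a.
Hypothesis FE : forall a : A, a != 0 -> exists s : seq A, exists2 u,
  u \in GRing.unit & (forall x, x \in s -> irr x) /\ a = u * \prod_(x <- s) x.

Implicit Types (a b c e : A) (p q r g h : {poly A}).

Lemma dv_sum (T : Type) (s : seq T) (P : pred T) (F : T -> {poly A}) d :
  (forall i, P i -> dv d (F i)) -> dv d (\sum_(i <- s | P i) F i).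
Proof.
move=> H; apply: (big_ind (dv d)) => //; [exact: dv0 | exact: dv_add].
Qed.
Lemma dv_sumA (T : Type) (s : seq T) (P : pred T) (F : T -> A) d :
  (forall i, P i -> dv d (F i)) -> dv d (\sum_(i <- s | P i) F i).
Proof.
move=> H; apply: (big_ind (dv d)) => //; [exact: dv0 | exact: dv_add].
Qed.

Lemma dvC_coef a g : dv a%:P g <-> forall i, dv a g`_i.
Proof.
split.
  by move=> [q ->] i; exists q`_i; rewrite coefMC.
move=> H.
pose Q i := proj1_sig (constructive_indefinite_description _ (H i)).
have QE i : g`_i = Q i * a := proj2_sig (constructive_indefinite_description _ (H i)).
exists (\poly_(i < size g) Q i); apply/polyP => i.
rewrite coefMC coef_poly; case: ltnP => lt; first exact: QE.
by rewrite mul0r nth_default.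
Qed.

Lemma unitC a : (a%:P \in GRing.unit) = (a \in GRing.unit).
Proof.
rewrite poly_unitE coefC /= size_polyC.
by case: (eqVneq a 0) => [->|]; rewrite ?unitr0 ?andbF.
Qed.

Lemma prmC a : prm a -> prm a%:P.
Proof.
move=> [nz [nu hp]]; split; first by rewrite polyC_eq0.
split; first by rewrite unitC.
move=> f g; rewrite !dvC_coef => H.
apply: NNPP => /not_or_and [Hf Hg].
have [i [ni mi]] : exists i, ~ dv a f`_i /\ forall j, (j < i)%N -> ~ ~ dv a f`_j.
  apply: ex_min; apply: NNPP => H'; apply: Hf => i0; apply: NNPP => ni0; by apply: H'; exists i0.
have [j [nj mj]] : exists j, ~ dv a g`_j /\ forall k, (k < j)%N -> ~ ~ dv a g`_k.
  apply: ex_min; apply: NNPP => H'; apply: Hg => i0; apply: NNPP => ni0; by apply: H'; exists i0.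
have := H (i + j)%N; rewrite coefM.
have lti : (i < (i + j).+1)%N by rewrite ltnS leq_addr.
rewrite (bigD1 (Ordinal lti)) //= addKn => hd.
have : dv a (f`_i * g`_j).
  apply: (dv_sub (b := \sum_(k < (i + j).+1 | k != Ordinal lti) f`_k * g`_(i + j - k))).
    by rewrite addrC.
  apply: dv_sumA => k; rewrite -val_eqE /= => nk.
  case: (ltngtP k i) => [lt|gt|eq]; last by rewrite eq eqxx in nk.
    by apply: dv_mulr; apply: NNPP; apply: mi.
  apply: dv_mull; apply: NNPP; apply: mj.
  by rewrite ltn_subLR ?ltn_add2r // -ltnS.
by case/hp.
Qed.

Section Big.
Variable p : {poly A}.
Hypothesis irp : irr p.
Hypothesis szp : (1 < size p)%N.

Lemma noC a : prm a -> ~ dv a%:P p.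
Proof.
move=> [nza [nua _]] [q eq]; case: irp => _ [_ /(_ _ _ eq)] [Uq|].
  move: szp; rewrite eq mulrC mul_polyC size_scale //.
  by move: Uq; rewrite poly_unitE => /andP[/eqP-> _].
by rewrite unitC (negbTE nua).
Qed.

Lemma cancelC e g : e != 0 -> dv p (e%:P * g) -> dv p g.
Proof.
move=> nze; case: (FE nze) => s [u Uu [irs ->]]; elim: s g irs => [|a s ih] g irs.
  rewrite big_nil mulr1 => /(dv_mull (u^-1)%:P).
  by rewrite mulrA -polyCM mulVr // mul1r.
have pa : prm a by apply: IP; apply: irs; rewrite mem_head.
rewrite big_cons => [[X eX]].
have : dv a%:P (X * p).
  by rewrite -eX mulrCA polyCM -mulrA; apply: dv_mulr; apply: dv_refl.
case/(proj2 (proj2 (prmC pa))) => [[Y eY]|]; last by move/(noC pa).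
apply: ih => [x xs|]; first by apply: irs; rewrite in_cons xs orbT.
exists Y; apply: (@mulfI _ a%:P); first by rewrite polyC_eq0; case: pa.
by rewrite mulrA (mulrC _ Y) -eY -eX mulrA -polyCM mulrCA.
Qed.

Lemma splitC c q r : c != 0 -> c%:P * p = q * r ->
  exists e, e != 0 /\ exists r', r = e%:P * r' /\ exists q', p = q' * r'.
Proof.
move=> nzc; case: (FE nzc) => s [u Uu [irs ->]].
elim: s q r irs => [|a s ih] q r irs.
  rewrite big_nil mulr1 => eq; exists 1; split; first exact: oner_neq0.
  exists r; split; first by rewrite mul1r.
  exists ((u^-1)%:P * q); rewrite -mulrA -eq mulrA -polyCM mulVr // mul1r //.
have pa : prm a by apply: IP; apply: irs; rewrite mem_head.
have irs' : forall x, x \in s -> irr x by move=> x xs; apply: irs; rewrite in_cons xs orbT.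
have nza : a%:P != 0 by rewrite polyC_eq0; case: pa.
rewrite big_cons => eq.
have : dv a%:P (q * r).
  by rewrite -eq mulrCA polyCM -!mulrA; apply: dv_mulr; apply: dv_refl.
case/(proj2 (proj2 (prmC pa))) => [[q1 eq1]|[r1 er1]].
  apply: (ih q1 r irs'); apply: (@mulfI _ a%:P) => //.
  by rewrite [RHS]mulrA [a%:P * q1]mulrC -eq1 -eq mulrA -polyCM mulrCA.
have [e [nze [r' [er' [q' eq']]]]] : exists e, e != 0 /\ exists r', r1 = e%:P * r' /\ exists q', p = q' * r'.
  apply: (ih q r1 irs'); apply: (@mulfI _ a%:P) => //.
  by rewrite [RHS]mulrCA [a%:P * r1]mulrC -er1 -eq mulrA -polyCM mulrCA.
exists (e * a); split; first by rewrite mulf_neq0 //; case: pa.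
exists r'; split; last by exists q'.
by rewrite er1 er' polyCM mulrAC.
Qed.

Lemma prm_big : prm p.
Proof.
case: (irp) => nzp [nup hirr]; split => //; split => // f g dfg.
case: (classic (dv p f)) => [|ndf]; [by left | right].
have nzf : f != 0 by apply/eqP => ef; apply: ndf; rewrite ef; apply: dv0.
pose T r := exists u v, r = u * f + v * p.
have Tadd x y : T x -> T y -> T (x + y).
  move=> [u1 [v1 ->]] [u2 [v2 ->]]; exists (u1 + u2), (v1 + v2).
  by rewrite !mulrDl addrACA.
have Tmul (w x : {poly A}) : T x -> T (w * x).
  by move=> [u [v ->]]; exists (w * u), (w * v); rewrite mulrDr !mulrA.
have Tp : T p by exists 0, 1; rewrite mul0r add0r mul1r.
have Tf : T f by exists 1, 0; rewrite mul0r addr0 mul1r.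
have [n [[r [Tr [nzr szr]]] mn]] : exists n, (exists r, T r /\ r != 0 /\ size r = n) /\
    forall j, (j < n)%N -> ~ exists r, T r /\ r != 0 /\ size r = j.
  by apply: ex_min; exists (size f), f.
have pdiv h : T h -> exists c, c != 0 /\ exists q, c%:P * h = q * r.
  move=> Th; exists (lead_coef r ^+ Pdiv.Idomain.scalp h r); split.
    exact: Pdiv.Idomain.lc_expn_scalp_neq0.
  exists (Pdiv.Idomain.divp h r).
  have eq := Pdiv.Idomain.divp_eq h r; rewrite -mul_polyC in eq.
  have : T (Pdiv.Idomain.modp h r).
    have -> : Pdiv.Idomain.modp h r = (lead_coef r ^+ Pdiv.Idomain.scalp h r)%:P * h
       + (-1) * (Pdiv.Idomain.divp h r * r) by rewrite eq mulN1r addrC addKr.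
    by apply: Tadd; apply Tmul => //; apply Tmul.
  case: (eqVneq (Pdiv.Idomain.modp h r) 0) => [e0|nz Tm]; first by rewrite eq e0 addr0.
  exfalso; apply: (mn (size (Pdiv.Idomain.modp h r))).
    by rewrite -szr; apply: Pdiv.Idomain.ltn_modpN0.
  by exists (Pdiv.Idomain.modp h r).
case: (pdiv p Tp) => c1 [nzc1 [q1 e1]].
case: (pdiv f Tf) => c2 [nzc2 [q2 e2]].
case: (leqP (size r) 1) => sr.
  have er : r = (r`_0)%:P by apply: size1_polyC.
  have nz0 : r`_0 != 0 by apply: contra nzr => /eqP e; rewrite er e.
  apply: (cancelC nz0); rewrite -er.
  case: Tr => u [v ->]; rewrite mulrDl -!mulrA; apply: dv_add.
    by apply: dv_mull.
  by apply: dv_mull; apply: dv_mulr; apply: dv_refl.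
case: (splitC nzc1 e1) => e [nze [r' [er' [q' eq']]]].
case: (hirr _ _ eq') => [Uq'|Ur'].
  exfalso; apply: ndf; apply: (cancelC nzc2); rewrite e2 er'.
  have -> : r' = q'^-1 * p by rewrite eq' mulKr.
  by apply: dv_mull; apply: dv_mull; apply: dv_mull; apply: dv_refl.
exfalso; move: sr; rewrite er' mul_polyC size_scale //.
by move: Ur'; rewrite poly_unitE => /andP[/eqP-> _].
Qed.

End Big.

Lemma IP_poly : forall p : {poly A}, irr p -> prm p.
Proof.
move=> p irp; case: (leqP (size p) 1) => sp; last exact: prm_big.
have ep : p = (p`_0)%:P by apply: size1_polyC.
case: irp => nzp [nup hp].
have nz0 : p`_0 != 0 by apply: contra nzp => /eqP e; rewrite ep e.
rewrite ep; apply: prmC; apply: IP; split => //; split.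
  by rewrite -unitC -ep.
move=> b c e; have : p = b%:P * c%:P by rewrite ep e polyCM.
by case/hp => U; [left | right]; rewrite -unitC.
Qed.

End PolyUFD.

Local Notation widen := (widen_ord (leqnSn _)).

Section Iso.
Variable k : fieldType.
Variable n : nat.

Lemma muniX (m : 'X_{1..n.+1}) : muni 'X_[m] =
  ('X_[[multinom m (widen i) | i < n]] : {mpoly k[n]})%:P * 'X^(m ord_max).
Proof. by rewrite muniE msuppX big_seq1 mcoeffX eqxx scale1r mul_polyC. Qed.

Lemma muni_mwiden (c : {mpoly k[n]}) : muni (mwiden c) = c%:P.
Proof.
rewrite (mpolyE c); elim: (msupp c) => [|m s ih].
  by rewrite !big_nil mwiden0 muni0.
rewrite !big_cons mwidenD muniD ih polyCD; congr (_ + _).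
rewrite mwidenZ muniZ mwidenX muniX mnmwiden_ordmax expr0 mulr1.
rewrite -mul_polyC -polyCM mul_mpolyC; congr (_ *: 'X_[_])%:P.
by apply/mnmP => i; rewrite mnmE mnmwiden_widen.
Qed.

Lemma muni_Xmax : muni ('X_(ord_max) : {mpoly k[n.+1]}) = 'X.
Proof.
rewrite muniX /mnm1 !mnmE eqxx expr1.
rewrite (_ : [multinom _ | i < n] = 0%MM) ?mpolyX0 ?mul1r //.
apply/mnmP => i; rewrite !mnmE; apply/eqP; rewrite eqb0.
by rewrite -val_eqE /= neq_ltn ltn_ord orbT.
Qed.

Lemma mmulti_sumN (q : {poly {mpoly k[n]}}) N : (size q <= N)%N ->
  mmulti q = \sum_(i < N) mwiden q`_i * 'X_(ord_max) ^+ i.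
Proof.
move=> le; rewrite /mmulti (big_ord_widen N (fun i => mwiden q`_i * 'X_(ord_max) ^+ i)) //.
rewrite [RHS](bigID (fun i : 'I_N => (i < size q)%N)) /= [X in _ = _ + X]big1 ?addr0 //.
by move=> i; rewrite -leqNgt => h; rewrite nth_default // mwiden0 mul0r.
Qed.

Lemma muni_mmulti (q : {poly {mpoly k[n]}}) : muni (mmulti q) = q.
Proof.
rewrite /mmulti raddf_sum /=.
under eq_bigr => i _ do rewrite rmorphM rmorphXn /= muni_mwiden muni_Xmax mul_polyC.
by rewrite -poly_def coefK.
Qed.

Lemma mmultiD (q1 q2 : {poly {mpoly k[n]}}) : mmulti (q1 + q2) = mmulti q1 + mmulti q2.
Proof.
pose N := maxn (size q1) (size q2).
rewrite (mmulti_sumN (N := N)) ?(leq_trans (size_polyD _ _)) //.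
rewrite (mmulti_sumN (N := N)) ?leq_maxl // (mmulti_sumN (q := q2) (N := N)) ?leq_maxr //.
by rewrite -big_split /=; apply: eq_bigr => i _; rewrite coefD mwidenD mulrDl.
Qed.

Lemma mmultiCZ (c : k) (q : {poly {mpoly k[n]}}) : mmulti (c%:MP *: q) = c *: mmulti q.
Proof.
rewrite (mmulti_sumN (N := size q)) ?size_scale_leq // /mmulti scaler_sumr.
apply: eq_bigr => i _; rewrite coefZ; by rewrite mwidenM mwidenC -mulrA mul_mpolyC.
Qed.

Lemma mmulti_mon (a : {mpoly k[n]}) j : mmulti (a%:P * 'X^j) = mwiden a * 'X_(ord_max) ^+ j.
Proof.
rewrite (mmulti_sumN (N := j.+1)); last first.
  by rewrite mul_polyC (leq_trans (size_scale_leq _ _)) // size_polyXn.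
rewrite big_ord_recr /= coefCM coefXn eqxx mulr1 big1 ?add0r //.
by move=> i _; rewrite coefCM coefXn ltn_eqF // mulr0 mwiden0 mul0r.
Qed.

Lemma mmulti_muni (p : {mpoly k[n.+1]}) : mmulti (muni p) = p.
Proof.
have E := mpolyE p; rewrite [in LHS]E [in RHS]E raddf_sum.
elim: (msupp p) => [|m s ih]; first by rewrite !big_nil /mmulti size_poly0 big_ord0.
rewrite !big_cons mmultiD ih; congr (_ + _).
rewrite /=.
rewrite muniZ mmultiCZ muniX mmulti_mon mwidenX mpolyXn -mpolyXD; congr (_ *: 'X_[_]).
apply/mnmP => i; rewrite mnmDE mulmnE /mnm1 mnmE.
case: (ltnP i n) => lt.
  have -> : i = widen (Ordinal lt) by apply: val_inj.
  rewrite mnmwiden_widen mnmE; rewrite (_ : (ord_max == widen _) = false) ?mul0n ?addn0 //.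
  by apply/eqP => /(congr1 val) /= e; move: lt; rewrite -e ltnn.
have -> : i = ord_max by apply: val_inj; apply/eqP; rewrite eqn_leq lt -ltnS ltn_ord.
by rewrite mnmwiden_ordmax eqxx mul1n add0n.
Qed.

End Iso.

Lemma IP_transfer (A B : idomainType) (phi : {rmorphism A -> B}) (psi : B -> A) :
  cancel phi psi -> cancel psi phi ->
  (forall b : B, irr b -> prm b) -> (forall a : A, irr a -> prm a).
Proof.
move=> K1 K2 IPB.
have psiM x y : psi (x * y) = psi x * psi y.
  by rewrite -{1}(K2 x) -{1}(K2 y) -rmorphM K1.
have psi1 : psi 1 = 1 by rewrite -(rmorph1 phi) K1.
have psi0 : psi 0 = 0 by rewrite -(rmorph0 phi) K1.
have Upsi x : x \in GRing.unit -> psi x \in GRing.unit.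
  move=> /unitrP [y [h1 h2]]; apply/unitrP; exists (psi y).
  by rewrite -!psiM h1 h2 psi1.
move=> a [nza [nua ha]].
have ir : irr (phi a).
  split; first by apply: contra nza => /eqP e; rewrite -(K1 a) e psi0.
  split; first by apply: contra nua => /Upsi; rewrite K1.
  move=> b c e; have : a = psi b * psi c by rewrite -psiM -e K1.
  by case/ha => /(rmorph_unit phi); rewrite K2; [left | right].
case: (IPB _ ir) => _ [_ hp]; split => //; split => // x y [q eq].
have : dv (phi a) (phi x * phi y) by exists (phi q); rewrite -!rmorphM eq.
case/hp => [[r er]|[r er]]; [left | right]; exists (psi r).
  by rewrite -(K1 x) er psiM K1.
by rewrite -(K1 y) er psiM K1.
Qed.

Section MP.
Variable k : fieldType.

Lemma mp_unit n (p : {mpoly k[n]}) : p != 0 -> (msize p <= 1)%N -> p \in GRing.unit.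
Proof.
move=> nz /msize1_polyC ep; rewrite ep; set c := p@_0.
have nzc : c != 0 by apply: contra nz => /eqP e; rewrite ep -/c e.
apply/unitrP; exists (c^-1)%:MP; rewrite -!mpolyCM mulVf // mulfV //.
Qed.

Lemma mp_size_nonunit n (p : {mpoly k[n]}) : p != 0 -> p \notin GRing.unit -> (1 < msize p)%N.
Proof. by move=> nz nu; rewrite ltnNge; apply: contra nu; apply: mp_unit. Qed.

Lemma FE_mp n (a : {mpoly k[n]}) : a != 0 -> exists s : seq {mpoly k[n]}, exists2 u,
  u \in GRing.unit & (forall x, x \in s -> irr x) /\ a = u * \prod_(x <- s) x.
Proof.
move: {2}(msize a) (leqnn (msize a)) => N; elim: N a => [|N ih] a le nz.
  by move: le; rewrite leqn0 msize_poly_eq0 (negbTE nz).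
case: (boolP (a \in GRing.unit)) => [Ua|nua].
  by exists [::], a => //; split => //; rewrite big_nil mulr1.
case: (classic (irr a)) => [ia|nia].
  exists [:: a], 1; first exact: unitr1.
  split; last by rewrite big_seq1 mul1r.
  by move=> x; rewrite mem_seq1 => /eqP->.
have [b [c [eab [nub nuc]]]] : exists b c, a = b * c /\ b \notin GRing.unit /\ c \notin GRing.unit.
  apply: NNPP => H; apply: nia; split => //; split => // b c e.
  apply: NNPP => /not_or_and [nb nc]; apply: H; exists b, c; split => //.
  by split; apply/negP.
have nzb : b != 0 by apply: contra nz => /eqP e; rewrite eab e mul0r.
have nzc : c != 0 by apply: contra nz => /eqP e; rewrite eab e mulr0.
have sb := mp_size_nonunit nzb nub; have sc := mp_size_nonunit nzc nuc.
have sa : msize a = (msize b + msize c).-1 by rewrite eab msizeM.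
have [sb' [ub Ub [ib eb]]] := ih b ltac:(lia) nzb.
have [sc' [uc Uc [ic ec]]] := ih c ltac:(lia) nzc.
exists (sb' ++ sc'), (ub * uc); first by rewrite unitrM Ub Uc.
split.
  by move=> x; rewrite mem_cat => /orP[]; [apply: ib | apply: ic].
by rewrite eab eb ec big_cat /= mulrACA.
Qed.

Lemma IP0 (a : {mpoly k[0]}) : irr a -> prm a.
Proof.
move=> [nz [nu _]]; exfalso; move/negP: nu; apply; apply: mp_unit => //.
rewrite msizeE; elim: (msupp a) => [|m s ih]; first by rewrite big_nil.
by rewrite big_cons geq_max ih andbT ltnS leqn0 mdegE big_ord0.
Qed.

Lemma IP_mp n : forall a : {mpoly k[n]}, irr a -> prm a.
Proof.
elim: n => [|n ih]; first exact: IP0.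
apply: (@IP_transfer _ _ (@muni n k) (@mmulti n k)).
- exact: mmulti_muni.
- exact: muni_mmulti.
apply: IP_poly => //; exact: FE_mp.
Qed.

End MP.

Theorem lemma3p4 (k : fieldType) (n m : nat) (f : 'I_m -> {mpoly k[n]}) :
  (2 <= m)%N ->
  gcd_one f ->
  exists h : nat -> {mpoly k[n]},
    (forall i, in_ideal f (h i)) /\
    (forall i j, i <> j -> coprime2 (h i) (h j)).
Proof.
move=> _ g1.
have munitE (d : {mpoly k[n]}) : munit d <-> d \in GRing.unit.
  split; first by move=> [e de]; apply/unitrP; exists e; rewrite mulrC de.
  by move=> Ud; exists d^-1; rewrite mulrV.
have gcd1 : forall d, (forall i, dv d (f i)) -> d \in GRing.unit.
  by move=> d H; apply/munitE; apply: g1.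
have [h [hI hC]] := gen_main gcd1 (@IP_mp k n) (@FE_mp k n).
exists h; split; first exact: hI.
by move=> i j ne d d1 d2; apply/munitE; apply: (hC i j ne).
Qed.
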